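(* Let $L>0$ and let $\gamma\in C^\infty([0,L],\mathbb{R}^2)$ be an arclength-parameterized plane curve with $\gamma(0)=0$, and with signed curvature $\kappa$ satisfying $\kappa(s)\kappa_s(s)>0$ for all $s\in(0,L)$. Then $\gamma(s)\neq0$ for all $s\in(0,L)$, so that a polar tangential angle function $\omega:(0,L)\to\mathbb{R}$ is defined, and $\kappa(s)\omega_s(s)>0$ for all $s\in(0,L)$; in particular $\omega$ is strictly monotone.
   Context: $T=\gamma_s$, $N=R_{\pi/2}T$ with $R_\theta$ the counterclockwise rotation by angle $\theta$, and $\gamma_{ss}=\kappa N$. For a curve with $\gamma(s)\neq0$ for $s\in(0,L)$, set $X:=\gamma/|\gamma|$; a polar tangential angle function is a smooth $\omega:(0,L)\to\mathbb{R}$ with $R_{\omega(s)}X(s)=T(s)$ for all $s\in(0,L)$. *)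

(* Defs.v *)
From Stdlib Require Import Reals.
From Coquelicot Require Import Coquelicot.
Open Scope R_scope.

Definition smooth (f : R -> R) : Prop :=
  forall (n : nat) (t : R), ex_derive_n f n t.

Definition smooth_on_open (a b : R) (f : R -> R) : Prop :=
  forall (n : nat) (t : R), a < t < b -> ex_derive_n f n t.

(* Plane curve gamma = (gx, gy); T = gamma_s = (gx', gy').
   Arclength parameterization on [0,L]: |gamma_s| = 1. *)
Definition arclength_param (L : R) (gx gy : R -> R) : Prop :=
  forall s, 0 <= s <= L -> (Derive gx s) ^ 2 + (Derive gy s) ^ 2 = 1.

(* kappa is the signed curvature: gamma_ss = kappa N on [0,L],
   where N = R_{pi/2} T = (- gy', gx'). *)
Definition signed_curvature (L : R) (gx gy kappa : R -> R) : Prop :=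
  forall s, 0 <= s <= L ->
    Derive_n gx 2 s = kappa s * (- Derive gy s) /\
    Derive_n gy 2 s = kappa s * Derive gx s.

(* omega is a polar tangential angle function on (0,L):
   smooth on (0,L) and R_{omega(s)} X(s) = T(s), X = gamma/|gamma|. *)
Definition polar_tangential_angle (L : R) (gx gy omega : R -> R) : Prop :=
  smooth_on_open 0 L omega /\
  forall s, 0 < s < L ->
    let r := sqrt (gx s ^ 2 + gy s ^ 2) in
    let X1 := gx s / r in
    let X2 := gy s / r in
    cos (omega s) * X1 - sin (omega s) * X2 = Derive gx s /\
    sin (omega s) * X1 + cos (omega s) * X2 = Derive gy s.

Definition strictly_monotone_on_open (a b : R) (f : R -> R) : Prop :=
  (forall u v, a < u < b -> a < v < b -> u < v -> f u < f v) \/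
  (forall u v, a < u < b -> a < v < b -> u < v -> f u > f v).

(* Main.v *)
Require Import Defs.
From Stdlib Require Import Reals Lra Lia Psatz.
From Coquelicot Require Import Coquelicot.
Open Scope R_scope.

Lemma loc_int a b t : a < t < b -> locally t (fun y => a < y < b).
Proof.
  intros H. assert (He: 0 < Rmin (t-a) (b-t)) by (apply Rmin_pos; lra).
  exists (mkposreal _ He). intros y Hy.
  change (Rabs (y - t) < Rmin (t-a) (b-t)) in Hy.
  pose proof (Rmin_l (t-a) (b-t)). pose proof (Rmin_r (t-a) (b-t)).
  apply Rabs_def2 in Hy. lra.
Qed.

Lemma cont_of_ex f x : ex_derive f x -> continuity_pt f x.
Proof. intros H. apply continuity_pt_filterlim. apply (ex_derive_continuous f x H). Qed.

Lemma Dn_shift f n x : Derive_n f (S n) x = Derive_n (Derive f) n x.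
Proof. pose proof (Derive_n_comp f n 1 x) as H. rewrite Nat.add_1_r in H. rewrite <- H.
  apply Derive_n_ext. intros y. simpl. apply Derive_ext. intros z. reflexivity. Qed.

Lemma Dn_loc a b f g n t : (forall y, a < y < b -> f y = g y) -> a < t < b ->
  Derive_n f n t = Derive_n g n t.
Proof. intros H Ht. apply Derive_n_ext_loc. eapply filter_imp; [|apply (loc_int a b t Ht)]. exact H. Qed.

Lemma exD_loc a b f g n t : (forall y, a < y < b -> f y = g y) -> a < t < b ->
  ex_derive (Derive_n f n) t -> ex_derive (Derive_n g n) t.
Proof. intros H Ht. apply ex_derive_ext_loc. eapply filter_imp; [|apply (loc_int a b t Ht)].
  intros y Hy. apply (Dn_loc a b); auto. Qed.

Definition Ck a b n f := forall k, (k <= n)%nat -> forall t, a < t < b -> ex_derive (Derive_n f k) t.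

Lemma Ck_ext a b n f g : (forall y, a < y < b -> f y = g y) -> Ck a b n f -> Ck a b n g.
Proof. intros H Hf k Hk t Ht. apply (exD_loc a b f); auto. Qed.

Lemma Ck_0 a b n f t : Ck a b n f -> a < t < b -> ex_derive f t.
Proof. intros H Ht. exact (H 0%nat (Nat.le_0_l _) t Ht). Qed.

Lemma Ck_le a b n m f : (m <= n)%nat -> Ck a b n f -> Ck a b m f.
Proof. intros Hmn H k Hk. apply H. lia. Qed.

Lemma Ck_D a b n f : Ck a b (S n) f -> Ck a b n (Derive f).
Proof. intros H k Hk t Ht. eapply ex_derive_ext. intros y. apply Dn_shift.
  apply H; [lia|auto]. Qed.

Lemma Ck_of_D a b n f : (forall t, a < t < b -> ex_derive f t) -> Ck a b n (Derive f) -> Ck a b (S n) f.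
Proof. intros H0 H [|k] Hk t Ht. apply H0; auto.
  eapply ex_derive_ext. intros y. symmetry. apply Dn_shift. apply H; [lia|auto]. Qed.

Lemma Ck_base a b f : (forall t, a < t < b -> ex_derive f t) -> Ck a b 0 f.
Proof. intros H k Hk t Ht. assert (k = 0%nat) by lia. subst. apply H; auto. Qed.

Lemma Ck_plus a b n : forall f g, Ck a b n f -> Ck a b n g -> Ck a b n (fun x => f x + g x).
Proof.
  induction n; intros f g Hf Hg.
  - apply Ck_base. intros t Ht. apply (ex_derive_plus f g); eapply Ck_0; eauto.
  - apply Ck_of_D. intros t Ht. apply (ex_derive_plus f g); eapply Ck_0; eauto.
    apply (Ck_ext a b n (fun x => Derive f x + Derive g x)).
    intros y Hy. symmetry. apply (Derive_plus f g); eapply Ck_0; eauto.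
    apply IHn; apply Ck_D; auto.
Qed.

Lemma Ck_mult a b n : forall f g, Ck a b n f -> Ck a b n g -> Ck a b n (fun x => f x * g x).
Proof.
  induction n; intros f g Hf Hg.
  - apply Ck_base. intros t Ht. apply (ex_derive_mult f g); eapply Ck_0; eauto.
  - apply Ck_of_D. intros t Ht. apply (ex_derive_mult f g); eapply Ck_0; eauto.
    apply (Ck_ext a b n (fun x => Derive f x * g x + f x * Derive g x)).
    intros y Hy. symmetry. apply (Derive_mult f g); eapply Ck_0; eauto.
    apply Ck_plus; apply IHn. apply Ck_D; auto. apply (Ck_le a b (S n)); auto.
    apply (Ck_le a b (S n)); auto. apply Ck_D; auto.
Qed.

Lemma Ck_const a b n c : Ck a b n (fun _ => c).
Proof. intros [|k] Hk t Ht. apply ex_derive_const.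
  eapply ex_derive_ext. intros y. symmetry. apply Derive_n_const. apply ex_derive_const. Qed.

Lemma Ck_inv a b f : (forall n, Ck a b n f) -> (forall t, a < t < b -> f t <> 0) ->
  forall n, Ck a b n (fun x => / f x).
Proof.
  intros Hf Hnz n. induction n.
  - apply Ck_base. intros t Ht. apply ex_derive_inv; auto. apply (Ck_0 a b 0%nat); auto.
  - apply Ck_of_D. intros t Ht. apply ex_derive_inv; auto. apply (Ck_0 a b 0%nat); auto.
    apply (Ck_ext a b n (fun x => ((-1) * Derive f x) * (/ f x * / f x))).
    intros y Hy. rewrite Derive_inv; auto. field. auto. apply (Ck_0 a b 0%nat); auto.
    apply Ck_mult. apply Ck_mult. apply Ck_const. apply Ck_D; auto.
    apply Ck_mult; auto.
Qed.

Lemma smooth_Ck a b f : (forall n t, ex_derive_n f n t) -> forall n, Ck a b n f.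
Proof. intros H n k Hk t Ht. exact (H (S k) t). Qed.

Lemma smooth_D f : (forall n t, ex_derive_n f n t) -> forall n t, ex_derive_n (Derive f) n t.
Proof. intros H [|n] t. exact I. simpl. eapply ex_derive_ext. intros y. apply Dn_shift.
  exact (H (S (S n)) t). Qed.
Lemma Deta (f : R -> R) t : Derive (fun x => f x) t = Derive f t.
Proof. reflexivity. Qed.
Lemma Du (f : R -> R) t l : is_derive f t l -> Derive (fun x : R => f x) t = l.
Proof. intros H. rewrite <- (is_derive_unique _ _ _ H). reflexivity. Qed.

Lemma D1 f x : Derive_n f 1 x = Derive f x.
Proof. simpl. apply Derive_ext. intros; reflexivity. Qed.
Lemma D2 f x : Derive_n f 2 x = Derive (Derive f) x.
Proof. simpl. apply Derive_ext. intros y. apply Derive_ext. intros; reflexivity. Qed.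

Lemma isd_F (k r p : R -> R) t dk dr dp : is_derive k t dk -> is_derive r t dr -> is_derive p t dp ->
  is_derive (fun t => k t * r t - 2 * p t) t (dk * r t + k t * dr - 2 * dp).
Proof.
  intros Hk Hr Hp.
  assert (ex_derive k t) by (eexists; eauto).
  assert (ex_derive r t) by (eexists; eauto).
  assert (ex_derive p t) by (eexists; eauto).
  auto_derive; auto.
  rewrite (Du _ _ _ Hk), (Du _ _ _ Hr), (Du _ _ _ Hp). ring.
Qed.

Lemma isd_divsqrt (f g : R -> R) s df dg : is_derive f s df -> is_derive g s dg -> 0 < g s ->
  is_derive (fun t => f t / sqrt (g t)) s ((df * g s - f s * dg / 2) / (g s * sqrt (g s))).
Proof.
  intros Hf Hg Hpos.
  assert (ex_derive f s) by (eexists; eauto).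
  assert (ex_derive g s) by (eexists; eauto).
  assert (Hs : 0 < sqrt (g s)) by (apply sqrt_lt_R0; auto).
  auto_derive. repeat split; auto. lra.
  rewrite (Du _ _ _ Hf), (Du _ _ _ Hg).
  set (R0 := sqrt (g s)) in *. assert (HR : g s = R0 * R0) by (unfold R0; rewrite sqrt_sqrt; lra).
  rewrite HR. field. lra.
Qed.

Lemma D_const (w u v h : R -> R) t : is_derive w t (h t) -> is_derive u t (- h t * v t) ->
  is_derive v t (h t * u t) -> is_derive (fun t => cos (w t) * u t + sin (w t) * v t) t 0.
Proof.
  intros Hw Hu Hv.
  assert (ex_derive w t) by (eexists; eauto).
  assert (ex_derive u t) by (eexists; eauto).
  assert (ex_derive v t) by (eexists; eauto).
  auto_derive; auto.
  rewrite (Du _ _ _ Hw), (Du _ _ _ Hu), (Du _ _ _ Hv). ring.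
Qed.

Lemma mvt_int a b f df u v : (forall t, a < t < b -> is_derive f t (df t)) -> a < u -> u < v -> v < b ->
  exists c, u <= c <= v /\ f v - f u = df c * (v - u).
Proof.
  intros Hd Hu Huv Hv.
  destruct (MVT_gen f u v df) as [c [Hc He]].
  - intros x Hx. rewrite Rmin_left in Hx by lra. rewrite Rmax_right in Hx by lra. apply Hd. lra.
  - intros x Hx. rewrite Rmin_left in Hx by lra. rewrite Rmax_right in Hx by lra.
    apply cont_of_ex. eexists. apply Hd. lra.
  - rewrite Rmin_left in Hc by lra. rewrite Rmax_right in Hc by lra. exists c. split; auto.
Qed.

Lemma isd_mm (a b c d : R -> R) t da db dc dd : is_derive a t da -> is_derive b t db ->
  is_derive c t dc -> is_derive d t dd ->
  is_derive (fun t => a t * b t + c t * d t) t (da * b t + a t * db + (dc * d t + c t * dd)).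
Proof.
  intros Ha Hb Hc Hd.
  assert (ex_derive a t) by (eexists; eauto). assert (ex_derive b t) by (eexists; eauto).
  assert (ex_derive c t) by (eexists; eauto). assert (ex_derive d t) by (eexists; eauto).
  auto_derive; auto.
  rewrite (Du _ _ _ Ha), (Du _ _ _ Hb), (Du _ _ _ Hc), (Du _ _ _ Hd). ring.
Qed.

Lemma isd_mms (a b c d : R -> R) t da db dc dd : is_derive a t da -> is_derive b t db ->
  is_derive c t dc -> is_derive d t dd ->
  is_derive (fun t => a t * b t - c t * d t) t (da * b t + a t * db - (dc * d t + c t * dd)).
Proof.
  intros Ha Hb Hc Hd.
  assert (ex_derive a t) by (eexists; eauto). assert (ex_derive b t) by (eexists; eauto).
  assert (ex_derive c t) by (eexists; eauto). assert (ex_derive d t) by (eexists; eauto).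
  auto_derive; auto.
  rewrite (Du _ _ _ Ha), (Du _ _ _ Hb), (Du _ _ _ Hc), (Du _ _ _ Hd). ring.
Qed.

Lemma isd_sin (w : R -> R) t dw : is_derive w t dw -> is_derive (fun t => sin (w t)) t (cos (w t) * dw).
Proof. intros H. assert (ex_derive w t) by (eexists; eauto). auto_derive; auto. rewrite (Du _ _ _ H). ring. Qed.
Lemma isd_cos (w : R -> R) t dw : is_derive w t dw -> is_derive (fun t => cos (w t)) t (- sin (w t) * dw).
Proof. intros H. assert (ex_derive w t) by (eexists; eauto). auto_derive; auto. rewrite (Du _ _ _ H). ring. Qed.

Lemma angle_exists p q : p * p + q * q = 1 -> exists c, cos c = p /\ sin c = q.
Proof.
  intros H. assert (Hp : -1 <= p <= 1) by (split; nra).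
  assert (Hs : sqrt (1 - p²) = Rabs q).
  { rewrite <- sqrt_Rsqr_abs. f_equal. unfold Rsqr. lra. }
  destruct (Rle_dec 0 q) as [Hq|Hq].
  - exists (acos p). rewrite cos_acos, sin_acos by auto. rewrite Hs, Rabs_right by lra. auto.
  - exists (- acos p). rewrite cos_neg, sin_neg, cos_acos, sin_acos by auto. rewrite Hs, Rabs_left by lra. split; auto. ring.
Qed.

Theorem corollary2p7 (L : R) (gx gy kappa : R -> R) :
  0 < L ->
  smooth gx -> smooth gy ->
  arclength_param L gx gy ->
  gx 0 = 0 -> gy 0 = 0 ->
  signed_curvature L gx gy kappa ->
  (forall s, 0 < s < L -> kappa s * Derive kappa s > 0) ->
  (forall s, 0 < s < L -> (gx s, gy s) <> (0, 0)) /\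
  (exists omega, polar_tangential_angle L gx gy omega) /\
  (forall omega, polar_tangential_angle L gx gy omega ->
     (forall s, 0 < s < L -> kappa s * Derive omega s > 0) /\
     strictly_monotone_on_open 0 L omega).
Proof.
  intros HL Sx Sy Harc Hx0 Hy0 Hcurv Hkk.
  assert (Ex0 : forall t, ex_derive gx t) by (intros t; exact (Sx 1%nat t)).
  assert (Ey0 : forall t, ex_derive gy t) by (intros t; exact (Sy 1%nat t)).
  assert (Ex1 : forall t, ex_derive (Derive gx) t).
  { intros t. eapply ex_derive_ext; [|exact (Sx 2%nat t)]. intros y. apply D1. }
  assert (Ey1 : forall t, ex_derive (Derive gy) t).
  { intros t. eapply ex_derive_ext; [|exact (Sy 2%nat t)]. intros y. apply D1. }
  assert (Ex2 : forall t, ex_derive (Derive_n gx 2) t) by (intros t; exact (Sx 3%nat t)).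
  assert (Ey2 : forall t, ex_derive (Derive_n gy 2) t) by (intros t; exact (Sy 3%nat t)).
  set (k0 := fun t => Derive gx t * Derive_n gy 2 t - Derive gy t * Derive_n gx 2 t).
  assert (Hk0 : forall s, 0 <= s <= L -> k0 s = kappa s).
  { intros s Hs. unfold k0. destruct (Hcurv s Hs) as [H1 H2]. rewrite H1, H2.
    replace (Derive gx s * (kappa s * Derive gx s) - Derive gy s * (kappa s * - Derive gy s))
      with (kappa s * (Derive gx s ^ 2 + Derive gy s ^ 2)) by ring. rewrite Harc; auto. ring. }
  assert (Ek0 : forall t, ex_derive k0 t).
  { intros t. unfold k0. auto_derive. repeat split; auto. }
  assert (Dk : forall s, 0 < s < L -> Derive kappa s = Derive k0 s).
  { intros s Hs. apply Derive_ext_loc. eapply filter_imp; [|apply (loc_int 0 L s Hs)].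
    intros y Hy. symmetry. apply Hk0. lra. }
  set (rho := fun t => gx t * gx t + gy t * gy t).
  set (P := fun t => gx t * Derive gy t - gy t * Derive gx t).
  set (Q := fun t => gx t * Derive gx t + gy t * Derive gy t).
  assert (Cx0 : forall t, is_derive gx t (Derive gx t)) by (intros; apply Derive_correct; auto).
  assert (Cy0 : forall t, is_derive gy t (Derive gy t)) by (intros; apply Derive_correct; auto).
  assert (Cx1 : forall t, is_derive (Derive gx) t (Derive_n gx 2 t)) by (intros; rewrite D2; apply Derive_correct; auto).
  assert (Cy1 : forall t, is_derive (Derive gy) t (Derive_n gy 2 t)) by (intros; rewrite D2; apply Derive_correct; auto).
  assert (Drho : forall t, is_derive rho t (2 * Q t)).
  { intros t. replace (2 * Q t) with (Derive gx t * gx t + gx t * Derive gx t + (Derive gy t * gy t + gy t * Derive gy t)) by (unfold Q; ring).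
    apply isd_mm; auto. }
  assert (DP : forall t, is_derive P t (gx t * Derive_n gy 2 t - gy t * Derive_n gx 2 t)).
  { intros t. replace (gx t * Derive_n gy 2 t - gy t * Derive_n gx 2 t) with (Derive gx t * Derive gy t + gx t * Derive_n gy 2 t - (Derive gy t * Derive gx t + gy t * Derive_n gx 2 t)) by ring.
    apply isd_mms; auto. }
  assert (DQ : forall t, is_derive Q t (Derive gx t ^ 2 + Derive gy t ^ 2 + gx t * Derive_n gx 2 t + gy t * Derive_n gy 2 t)).
  { intros t. replace (Derive gx t ^ 2 + Derive gy t ^ 2 + gx t * Derive_n gx 2 t + gy t * Derive_n gy 2 t) with (Derive gx t * Derive gx t + gx t * Derive_n gx 2 t + (Derive gy t * Derive gy t + gy t * Derive_n gy 2 t)) by ring.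
    apply isd_mm; auto. }
  set (F := fun t => k0 t * rho t - 2 * P t).
  assert (DF : forall t, is_derive F t (Derive k0 t * rho t + k0 t * (2 * Q t) - 2 * (gx t * Derive_n gy 2 t - gy t * Derive_n gx 2 t))).
  { intros t. apply isd_F; auto. apply Derive_correct; auto. }
  assert (DF' : forall t, 0 < t < L -> is_derive F t (Derive kappa t * rho t)).
  { intros t Ht. replace (Derive kappa t * rho t) with (Derive k0 t * rho t + k0 t * (2 * Q t) - 2 * (gx t * Derive_n gy 2 t - gy t * Derive_n gx 2 t)). apply DF.
    destruct (Hcurv t) as [H1 H2]; [lra|]. rewrite H1, H2, Dk, Hk0; auto; try lra.
    unfold Q. ring. }
  assert (Hsig : exists sg, (sg = 1 \/ sg = -1) /\ forall t, 0 < t < L -> sg * kappa t > 0).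
  { set (m := L / 2).
    assert (Hm : 0 < m < L) by (unfold m; lra).
    assert (Hnz : forall t, 0 < t < L -> k0 t <> 0).
    { intros t Ht. rewrite Hk0 by lra. intros E. specialize (Hkk t Ht). rewrite E in Hkk. lra. }
    assert (Hpm : forall t, 0 < t < L -> k0 t * k0 m > 0).
    { intros t Ht. destruct (Rlt_le_dec 0 (k0 t * k0 m)) as [H|H]; [lra|].
      exfalso.
      assert (Hc : continuity k0) by (intros x; apply cont_of_ex; auto).
      destruct (IVT_gen k0 t m 0 Hc) as [x [Hx Ex]].
      { destruct (Rle_dec 0 (k0 t)) as [H1|H1].
        - assert (k0 m <= 0) by (destruct (Rle_dec (k0 m) 0); [auto|]; pose proof (Hnz t Ht); nra).
          rewrite Rmin_right by lra. rewrite Rmax_left by lra. lra.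
        - assert (0 <= k0 m) by nra.
          rewrite Rmin_left by lra. rewrite Rmax_right by lra. lra. }
      assert (0 < x < L).
      { destruct (Rle_dec t m). rewrite Rmin_left in Hx by lra. rewrite Rmax_right in Hx by lra. lra.
        rewrite Rmin_right in Hx by lra. rewrite Rmax_left in Hx by lra. lra. }
      apply (Hnz x); auto. }
    destruct (Rlt_le_dec 0 (k0 m)) as [H|H].
    - exists 1. split; [left; auto|]. intros t Ht. rewrite <- Hk0 by lra. specialize (Hpm t Ht). nra.
    - exists (-1). split; [right; auto|]. intros t Ht. rewrite <- Hk0 by lra. specialize (Hpm t Ht).
      assert (k0 m <> 0) by (apply Hnz; auto). nra. }
  destruct Hsig as [sg [Hsg Hsk]].
  assert (Hsk' : forall t, 0 < t < L -> sg * Derive kappa t > 0).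
  { intros t Ht. specialize (Hsk t Ht). specialize (Hkk t Ht). destruct Hsg; subst; nra. }
  assert (F0 : F 0 = 0) by (unfold F, k0, rho, P; rewrite Hx0, Hy0; ring).
  set (dF := fun t => Derive k0 t * rho t + k0 t * (2 * Q t) - 2 * (gx t * Derive_n gy 2 t - gy t * Derive_n gx 2 t)).
  assert (dFpos : forall c, 0 <= c < L -> sg * dF c >= 0).
  { intros c Hc. destruct (Req_dec c 0) as [E|E].
    - subst c. unfold dF, rho, Q. rewrite Hx0, Hy0. lra.
    - assert (Ec : dF c = Derive kappa c * rho c).
      { apply eq_trans with (Derive F c). symmetry. apply is_derive_unique. apply DF. apply is_derive_unique, DF'. lra. }
      rewrite Ec. specialize (Hsk' c ltac:(lra)). assert (0 <= rho c) by (unfold rho; nra). nra. }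
  assert (Fmono : forall t s, 0 <= t -> t < s -> s < L -> sg * F t <= sg * F s).
  { intros t s Ht Hts Hs. destruct (mvt_int (t - 1) (s + 1) F dF t s) as [c [Hc Ec]]; try lra.
    intros y _. apply DF. specialize (dFpos c ltac:(lra)).
    assert (sg * F s - sg * F t = (sg * dF c) * (s - t)) by (rewrite Rmult_assoc, <- Ec; ring). nra. }
  assert (Fpos : forall s, 0 < s < L -> sg * F s > 0).
  { intros s Hs. pose proof (Fmono 0 s ltac:(lra) ltac:(lra) ltac:(lra)) as H. rewrite F0 in H.
    destruct (Rle_lt_or_eq_dec _ _ H) as [H'|H']; [lra|]. exfalso.
    assert (Fz : forall y, 0 < y < s -> F y = 0).
    { intros y Hy. pose proof (Fmono 0 y ltac:(lra) ltac:(lra) ltac:(lra)).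
      pose proof (Fmono y s ltac:(lra) ltac:(lra) ltac:(lra)). rewrite F0 in *.
      destruct Hsg; subst; lra. }
    assert (Gz : forall y, 0 < y < s -> gx y = 0 /\ gy y = 0).
    { intros y Hy. assert (E1 : is_derive F y 0).
      { eapply is_derive_ext_loc; [|apply (is_derive_const 0 y)].
        eapply filter_imp; [|apply (loc_int 0 s y Hy)]. intros z Hz. simpl. rewrite Fz; auto. }
      assert (E2 := DF' y ltac:(lra)).
      apply is_derive_unique in E1. apply is_derive_unique in E2. rewrite E1 in E2.
      specialize (Hsk' y ltac:(lra)).
      assert (rho y = 0).
      { destruct (Req_dec (rho y) 0); auto. exfalso. assert (Derive kappa y = 0).
        apply (Rmult_eq_reg_r (rho y)); auto. lra. nra. }
      unfold rho in *. split; nra. }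
    assert (Dxz : Derive gx (s/2) = 0).
    { rewrite (Derive_ext_loc gx (fun _ => 0)). apply Derive_const.
      eapply filter_imp; [|apply (loc_int 0 s (s/2) ltac:(lra))]. intros z Hz. apply Gz; auto. }
    assert (Dyz : Derive gy (s/2) = 0).
    { rewrite (Derive_ext_loc gy (fun _ => 0)). apply Derive_const.
      eapply filter_imp; [|apply (loc_int 0 s (s/2) ltac:(lra))]. intros z Hz. apply Gz; auto. }
    pose proof (Harc (s/2) ltac:(lra)) as HA. rewrite Dxz, Dyz in HA. lra. }
  assert (rpos : forall s, 0 < s < L -> 0 < rho s).
  { intros s Hs. specialize (Fpos s Hs). unfold rho.
    destruct (Req_dec (gx s) 0) as [E1|E1]; [destruct (Req_dec (gy s) 0) as [E2|E2]|]; try nra.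
    exfalso. unfold F, rho, P in Fpos. rewrite E1, E2 in Fpos. lra. }
  assert (kF : forall s, 0 < s < L -> kappa s * F s > 0).
  { intros s Hs. specialize (Fpos s Hs). specialize (Hsk s Hs). destruct Hsg; subst; nra. }
  set (u := fun t => Q t / sqrt (rho t)).
  set (v := fun t => P t / sqrt (rho t)).
  set (h := fun t => k0 t - P t / rho t).
  assert (K : forall s, 0 < s < L -> is_derive u s (- h s * v s) /\ is_derive v s (h s * u s)).
  { intros s Hs. destruct (Hcurv s) as [H1 H2]; [lra|]. pose proof (rpos s Hs) as Hr.
    assert (Hsq : 0 < sqrt (rho s)) by (apply sqrt_lt_R0; auto).
    split.
    - replace (- h s * v s) with (((Derive gx s ^ 2 + Derive gy s ^ 2 + gx s * Derive_n gx 2 s + gy s * Derive_n gy 2 s) * rho s - Q s * (2 * Q s) / 2) / (rho s * sqrt (rho s))).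
      apply isd_divsqrt; auto.
      unfold h, v. rewrite Hk0 by lra. rewrite H1, H2. unfold P, Q, rho in *. field. split; lra.
    - replace (h s * u s) with (((gx s * Derive_n gy 2 s - gy s * Derive_n gx 2 s) * rho s - P s * (2 * Q s) / 2) / (rho s * sqrt (rho s))).
      apply isd_divsqrt; auto.
      unfold h, u. rewrite Hk0 by lra. rewrite H1, H2. unfold P, Q, rho in *. field. split; lra. }
  assert (Hrr : forall t, 0 < t < L -> sqrt (rho t) * sqrt (rho t) = gx t * gx t + gy t * gy t).
  { intros t Ht. rewrite sqrt_sqrt. reflexivity. pose proof (rpos t Ht). lra. }
  assert (UV1 : forall t, 0 < t < L -> u t * u t + v t * v t = 1).
  { intros t Ht. pose proof (rpos t Ht) as Hr. pose proof (Hrr t Ht) as HR.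
    assert (Hsq : 0 < sqrt (rho t)) by (apply sqrt_lt_R0; auto).
    unfold u, v. transitivity ((Q t * Q t + P t * P t) / (sqrt (rho t) * sqrt (rho t))).
    field. lra. rewrite HR. 
    replace (Q t * Q t + P t * P t) with ((gx t * gx t + gy t * gy t) * (Derive gx t ^ 2 + Derive gy t ^ 2)) by (unfold P, Q; ring).
    rewrite Harc by lra. field. unfold rho in Hr. lra. }
  assert (CS_to_rel : forall om t, 0 < t < L -> cos (om t) = u t -> sin (om t) = v t ->
    let r := sqrt (gx t ^ 2 + gy t ^ 2) in
    let X1 := gx t / r in
    let X2 := gy t / r in
    cos (om t) * X1 - sin (om t) * X2 = Derive gx t /\
    sin (om t) * X1 + cos (om t) * X2 = Derive gy t).
  { intros om t Ht Hc Hs r X1 X2. pose proof (rpos t Ht) as Hr. pose proof (Hrr t Ht) as HR.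
    assert (Er : r = sqrt (rho t)) by (unfold r, rho; f_equal; ring).
    assert (Hsq : 0 < sqrt (rho t)) by (apply sqrt_lt_R0; auto).
    unfold X1, X2. rewrite Er, Hc, Hs. unfold u, v. unfold rho in Hr. split.
    - transitivity ((Q t * gx t - P t * gy t) / (sqrt (rho t) * sqrt (rho t))). field. lra.
      rewrite HR. unfold P, Q. field. lra.
    - transitivity ((P t * gx t + Q t * gy t) / (sqrt (rho t) * sqrt (rho t))). field. lra.
      rewrite HR. unfold P, Q. field. lra. }
  assert (rel_to_CS : forall om t, 0 < t < L ->
    (let r := sqrt (gx t ^ 2 + gy t ^ 2) in
    let X1 := gx t / r in
    let X2 := gy t / r in
    cos (om t) * X1 - sin (om t) * X2 = Derive gx t /\
    sin (om t) * X1 + cos (om t) * X2 = Derive gy t) -> cos (om t) = u t /\ sin (om t) = v t).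
  { intros om t Ht Hrel. cbv zeta in Hrel. destruct Hrel as [E1 E2].
    pose proof (rpos t Ht) as Hr. pose proof (Hrr t Ht) as HR.
    assert (Er : sqrt (gx t ^ 2 + gy t ^ 2) = sqrt (rho t)) by (unfold rho; f_equal; ring).
    rewrite Er in E1, E2.
    assert (Hsq : 0 < sqrt (rho t)) by (apply sqrt_lt_R0; auto).
    unfold u, v, P, Q. rewrite <- E1, <- E2. unfold rho in Hr. split.
    - transitivity (cos (om t) * (gx t * gx t + gy t * gy t) / (sqrt (rho t) * sqrt (rho t))).
      rewrite HR. field. lra. field. lra.
    - transitivity (sin (om t) * (gx t * gx t + gy t * gy t) / (sqrt (rho t) * sqrt (rho t))).
      rewrite HR. field. lra. field. lra. }
  assert (Dom : forall om s, 0 < s < L -> (forall t, 0 < t < L -> cos (om t) = u t /\ sin (om t) = v t) ->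
    ex_derive om s -> Derive om s = h s).
  { intros om s Hs Hcs Hex. set (d := Derive om s).
    assert (Hd : is_derive om s d) by (apply Derive_correct; auto).
    destruct (K s Hs) as [Ku Kv].
    assert (E1 : is_derive v s (cos (om s) * d)).
    { eapply is_derive_ext_loc; [|apply isd_sin; exact Hd].
      eapply filter_imp; [|apply (loc_int 0 L s Hs)]. intros z Hz. apply Hcs; auto. }
    assert (E2 : is_derive u s (- sin (om s) * d)).
    { eapply is_derive_ext_loc; [|apply isd_cos; exact Hd].
      eapply filter_imp; [|apply (loc_int 0 L s Hs)]. intros z Hz. apply Hcs; auto. }
    apply is_derive_unique in E1. apply is_derive_unique in E2.
    apply is_derive_unique in Ku. apply is_derive_unique in Kv.
    destruct (Hcs s Hs) as [Hc Hsn].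
    assert (A1 : cos (om s) * d - h s * cos (om s) = 0).
    { rewrite Hc at 2. rewrite <- E1, Kv. ring. }
    assert (A2 : sin (om s) * d - h s * sin (om s) = 0).
    { rewrite Hsn at 2. apply Ropp_eq_0_compat in A1. replace (sin (om s) * d) with (- (- sin (om s) * d)) by ring.
      rewrite <- E2, Ku. ring. }
    pose proof (sin2_cos2 (om s)) as Hp. unfold Rsqr in Hp.
    assert (E : (d - h s) * (sin (om s) * sin (om s) + cos (om s) * cos (om s)) =
      cos (om s) * (cos (om s) * d - h s * cos (om s)) + sin (om s) * (sin (om s) * d - h s * sin (om s))) by ring.
    rewrite Hp, A1, A2 in E. lra. }
  assert (SD : forall f : R -> R, smooth f -> forall n, Ck 0 L n f) by (intros f Sf; apply smooth_Ck; exact Sf).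
  assert (SD2 : forall f : R -> R, smooth f -> forall n, Ck 0 L n (Derive_n f 2)).
  { intros f Sf n. apply (Ck_ext 0 L n (Derive (Derive f))). intros y _. symmetry. apply D2.
    apply smooth_Ck. apply smooth_D. apply smooth_D. exact Sf. }
  assert (SD1 : forall f : R -> R, smooth f -> forall n, Ck 0 L n (Derive f)).
  { intros f Sf n. apply smooth_Ck. apply smooth_D. exact Sf. }
  assert (Ch : forall n, Ck 0 L n h).
  { intros n. apply (Ck_ext 0 L n (fun t => (Derive gx t * Derive_n gy 2 t + (-1) * (Derive gy t * Derive_n gx 2 t))
       + ((-1) * (gx t * Derive gy t + (-1) * (gy t * Derive gx t))) * (/ (gx t * gx t + gy t * gy t)))).
    { intros y _. unfold h, k0, P, rho. unfold Rdiv. ring. }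
    apply Ck_plus.
    - apply Ck_plus. apply Ck_mult; auto. apply Ck_mult. apply Ck_const. apply Ck_mult; auto.
    - apply Ck_mult. apply Ck_mult. apply Ck_const. apply Ck_plus. apply Ck_mult; auto.
      apply Ck_mult. apply Ck_const. apply Ck_mult; auto.
      apply (Ck_inv 0 L (fun t => gx t * gx t + gy t * gy t)).
      + intros m. apply Ck_plus; apply Ck_mult; auto.
      + intros t Ht. pose proof (rpos t Ht). unfold rho in *. lra. }
  split; [|split].
  - intros s Hs E. injection E as E1 E2. pose proof (rpos s Hs) as Hr. unfold rho in Hr.
    rewrite E1, E2 in Hr. lra.
  - set (s0 := L / 2). assert (Hs0 : 0 < s0 < L) by (unfold s0; lra).
    destruct (angle_exists (u s0) (v s0) (UV1 s0 Hs0)) as [c0 [Hc0 Hs0']].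
    set (om := fun t => c0 + RInt h s0 t).
    assert (Hcont : forall t, 0 < t < L -> continuous h t).
    { intros t Ht. apply continuity_pt_filterlim, cont_of_ex. apply (Ck_0 0 L 0%nat); auto. }
    assert (HRI : forall t, 0 < t < L -> is_derive (RInt h s0) t (h t)).
    { intros t Ht. apply (is_derive_RInt h (RInt h s0) s0 t); [|apply Hcont; auto].
      eapply filter_imp; [|apply (loc_int 0 L t Ht)]. intros b Hb. apply (RInt_correct (V:=R_CompleteNormedModule)).
      apply (ex_RInt_continuous (V:=R_CompleteNormedModule)). intros z Hz. apply Hcont.
      split; [apply Rlt_le_trans with (Rmin s0 b)|apply Rle_lt_trans with (Rmax s0 b)]; try lra;
        unfold Rmin, Rmax; destruct Rle_dec; lra. }
    assert (Dom' : forall t, 0 < t < L -> is_derive om t (h t)).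
    { intros t Ht. pose proof (is_derive_plus (fun _ => c0) (RInt h s0) t zero (h t) (is_derive_const c0 t) (HRI t Ht)) as H.
      rewrite plus_zero_l in H. exact H. }
    assert (Som : smooth_on_open 0 L om).
    { intros [|k] t Ht. exact I.
      assert (Ck 0 L (S k) om).
      { apply Ck_of_D. intros y Hy. eexists. apply Dom'; auto.
        apply (Ck_ext 0 L k h). intros y Hy. symmetry. apply is_derive_unique. apply Dom'; auto. apply Ch. }
      exact (H k (Nat.le_succ_diag_r k) t Ht). }
    set (Df := fun t => cos (om t) * u t + sin (om t) * v t).
    assert (DD : forall t, 0 < t < L -> is_derive Df t 0).
    { intros t Ht. destruct (K t Ht). apply D_const with h; auto. }
    assert (Dv : forall t, 0 < t < L -> Df t = Df s0).
    { intros t Ht. destruct (Rtotal_order t s0) as [H|[H|H]].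
      - destruct (mvt_int 0 L Df (fun _ => 0) t s0) as [c [_ Ec]]; auto; try lra.
      - subst; auto.
      - destruct (mvt_int 0 L Df (fun _ => 0) s0 t) as [c [_ Ec]]; auto; try lra. }
    assert (Ds0 : Df s0 = 1).
    { unfold Df. assert (om s0 = c0) by (unfold om; rewrite RInt_point; apply Rplus_0_r).
      rewrite H, Hc0, Hs0'. apply UV1; auto. }
    assert (CS : forall t, 0 < t < L -> cos (om t) = u t /\ sin (om t) = v t).
    { intros t Ht. pose proof (Dv t Ht) as E. rewrite Ds0 in E. unfold Df in E.
      pose proof (UV1 t Ht). pose proof (sin2_cos2 (om t)) as Hp. unfold Rsqr in Hp.
      assert (Z : (cos (om t) - u t) * (cos (om t) - u t) + (sin (om t) - v t) * (sin (om t) - v t) = 0) by nra.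
      pose proof (Rle_0_sqr (cos (om t) - u t)). pose proof (Rle_0_sqr (sin (om t) - v t)). unfold Rsqr in *.
      assert (Z1 : (cos (om t) - u t) * (cos (om t) - u t) = 0) by lra.
      assert (Z2 : (sin (om t) - v t) * (sin (om t) - v t) = 0) by lra.
      apply Rmult_integral in Z1. apply Rmult_integral in Z2. split; lra. }
    exists om. split; auto. intros s Hs. destruct (CS s Hs). apply CS_to_rel; auto.
  - intros omega [Som Hrel].
    assert (CS : forall t, 0 < t < L -> cos (omega t) = u t /\ sin (omega t) = v t).
    { intros t Ht. apply rel_to_CS; auto. }
    assert (Eo : forall t, 0 < t < L -> ex_derive omega t) by (intros t Ht; exact (Som 1%nat t Ht)).
    assert (KO : forall s, 0 < s < L -> kappa s * Derive omega s > 0).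
    { intros s Hs. rewrite (Dom omega s Hs CS (Eo s Hs)). unfold h. rewrite Hk0 by lra.
      pose proof (kF s Hs) as H. pose proof (rpos s Hs) as Hr. pose proof (Hsk s Hs) as Hk.
      assert (Hk2 : kappa s * kappa s > 0) by (destruct Hsg; subst; nra).
      unfold F in H. rewrite Hk0 in H by lra.
      replace (kappa s * (kappa s - P s / rho s)) with ((kappa s * (kappa s * rho s - 2 * P s) + kappa s * kappa s * rho s) / (2 * rho s)) by (field; lra).
      apply Rdiv_lt_0_compat; nra. }
    split; auto.
    assert (SO : forall t, 0 < t < L -> sg * Derive omega t > 0).
    { intros t Ht. specialize (KO t Ht). specialize (Hsk t Ht). destruct Hsg; subst; nra. }
    assert (DO : forall t, 0 < t < L -> is_derive omega t (Derive omega t)) by (intros; apply Derive_correct; auto).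
    destruct Hsg; subst sg.
    + left. intros a b Ha Hb Hab. destruct (mvt_int 0 L omega (Derive omega) a b) as [c [Hc Ec]]; auto; try lra.
      specialize (SO c ltac:(lra)). nra.
    + right. intros a b Ha Hb Hab. destruct (mvt_int 0 L omega (Derive omega) a b) as [c [Hc Ec]]; auto; try lra.
      specialize (SO c ltac:(lra)). nra.
Qed.
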